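(* (1) Every $\alpha_{2^-}$ topological space is locally Ramsey. (2) Every $\alpha_{2^-}$ topological group is Ramsey.
   Context: A countably infinite set $A$ in a space $X$ converges to $x\in X$ if $x\notin A$ and every neighborhood of $x$ contains all but finitely many elements of $A$. $\lim_m x_{nm}=x$ means $x_{nm}\neq x$ for all $m$ and every neighborhood of $x$ contains $x_{nm}$ for all but finitely many $m$. A space $X$ is $\alpha_{2^-}$ if for each $x\in X$, whenever $\lim_m x_{nm}=x$ for all $n\in\mathbb N$, there are $m_1<m_2<\dots$ such that $\bigcup_n\{x_{1m_n},\dots,x_{nm_n}\}$ converges to $x$. A space $X$ is locally Ramsey if for each $x\in X$, whenever $\lim_m x_{nm}=x$ for all $n$, there is an infinite $I\subseteq\mathbb N$ such that $\{x_{nm}: n,m\in I,\ n<m\}$ converges to $x$. A space $X$ is Ramsey (Nogura–Shakhmatov) if whenever $\lim_n\lim_m x_{nm}=x$ (i.e., $\lim_m x_{nm}=x_n$ for each $n$ and $\lim_n x_n=x$), there is an infinite $I\subseteq\mathbb N$ such that for each neighborhood $U$ of $x$ there is $k$ with $\{x_{nm}: k<n<m,\ n,m\in I\}\subseteq U$. *)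

(* Defs.v *)
From HB Require Import structures.
From mathcomp Require Import all_boot all_order all_algebra.
From mathcomp Require Import all_classical all_reals all_analysis.
Set Implicit Arguments. Unset Strict Implicit. Unset Printing Implicit Defensive.
Local Open Scope classical_set_scope.

Definition seq_lim (X : topologicalType) (s : nat -> X) (x : X) : Prop :=
  (forall m, s m <> x) /\ (s @ \oo --> x).

Definition set_conv (X : topologicalType) (A : set X) (x : X) : Prop :=
  countable A /\ infinite_set A /\ ~ A x /\
  (forall U, nbhs x U -> finite_set (A `\` U)).

(* alpha_{2^-} (indices shifted to start at 0) *)
Definition alpha2m (X : topologicalType) : Prop :=
  forall (x : X) (s : nat -> nat -> X), (forall n, seq_lim (s n) x) ->
  exists mm : nat -> nat, (forall n, (mm n < mm n.+1)%N) /\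
    set_conv [set y | exists n i, (i <= n)%N /\ y = s i (mm n)] x.

Definition locally_ramsey (X : topologicalType) : Prop :=
  forall (x : X) (s : nat -> nat -> X), (forall n, seq_lim (s n) x) ->
  exists I : set nat, infinite_set I /\
    set_conv [set y | exists n m, I n /\ I m /\ (n < m)%N /\ y = s n m] x.

(* Ramsey in the sense of Nogura--Shakhmatov *)
Definition ramsey (X : topologicalType) : Prop :=
  forall (x : X) (s : nat -> nat -> X) (xs : nat -> X),
  (forall n, seq_lim (s n) (xs n)) -> seq_lim xs x ->
  exists I : set nat, infinite_set I /\
    forall U, nbhs x U -> exists k : nat,
      forall n m, I n -> I m -> (k < n)%N -> (n < m)%N -> U (s n m).

Definition topological_group (X : topologicalType) (mul : X -> X -> X)
  (inv : X -> X) (e : X) : Prop :=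
  associative mul /\ left_id e mul /\ left_inverse e inv mul /\
  continuous (fun p : X * X => mul p.1 p.2) /\ continuous inv.

(* Main.v *)
Require Import Defs.
From HB Require Import structures.
From mathcomp Require Import all_boot all_order all_algebra.
From mathcomp Require Import all_classical all_reals all_analysis.
From mathcomp Require Import zify.
Set Implicit Arguments. Unset Strict Implicit. Unset Printing Implicit Defensive.
Local Open Scope classical_set_scope.

Lemma eventP (X : topologicalType) (s : nat -> X) (x : X) :
  s @ \oo --> x <-> forall U, nbhs x U -> exists N, forall m, (N <= m)%N -> U (s m).
Proof.
split.
- move=> h U /h [N _ HN]. exists N => m Hm. exact: HN.
- move=> h U /h [N HN]. by exists N => // m; apply: HN.
Qed.

Lemma subseq_lim (X : topologicalType) (s : nat -> X) x (h : nat -> nat) :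
  seq_lim s x -> (forall m, (m <= h m)%N) -> seq_lim (fun m => s (h m)) x.
Proof.
move=> [ne cv] hh; split => [m|]; first exact: ne.
apply/eventP => U /(proj1 (eventP _ _) cv) [N HN].
exists N => m Hm; apply: HN; exact: leq_trans Hm (hh m).
Qed.

Lemma seq_bound (s : seq nat) : exists M, forall n, n \in s -> (n < M)%N.
Proof.
elim: s => [|a s [M HM]]; first by exists 0.
exists (maxn a.+1 M) => n; rewrite inE => /orP[/eqP->|/HM]; lia.
Qed.

Lemma fin_bound (A : set nat) : finite_set A -> exists M, forall n, A n -> (n < M)%N.
Proof.
move=> /finite_fsetP [X ->].
have [M HM] := seq_bound (finmap.enum_fset X).
by exists M => n /= Hn; apply: HM.
Qed.

Lemma gid (g : nat -> nat) : (forall n, g n < g n.+1)%N -> forall n, (n <= g n)%N.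
Proof. move=> hg; elim => [|n IH] //; have := hg n; lia. Qed.

Lemma inf_range (g : nat -> nat) : (forall n, g n < g n.+1)%N ->
  infinite_set [set n | exists b, n = g b].
Proof.
move=> hg /fin_bound [M HM].
have := HM (g M) (ex_intro _ M erefl); have := gid hg M; lia.
Qed.

Lemma gmono (g : nat -> nat) : (forall n, g n < g n.+1)%N ->
  forall a b, (g a < g b)%N <-> (a < b)%N.
Proof.
move=> hg a b; have H := homo_ltn ltn_trans hg.
split => h; last exact: H.
case: (ltngtP a b) => // [hab|hab]; last by move: h; rewrite hab ltnn.
have := H _ _ hab; lia.
Qed.

Lemma fin_ev (P : nat -> nat -> Prop) c :
  (forall i, (i < c)%N -> exists N, forall m, (N <= m)%N -> P i m) ->
  exists N, forall m, (N <= m)%N -> forall i, (i < c)%N -> P i m.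
Proof.
elim: c => [|c IH] h; first by exists 0.
have [N1 H1] := IH (fun i hi => h i (ltnW hi)).
have [N2 H2] := h c (ltnSn c).
exists (maxn N1 N2) => m hm i hi.
case: (ltngtP i c) => [hic||->]; last (by apply: H2; lia); last by lia.
by apply: H1 => //; lia.
Qed.

Lemma sep (X : topologicalType) (hX : alpha2m X) (x y : X) :
  y <> x -> exists U, nbhs x U /\ ~ U y.
Proof.
move=> hyx; apply: contrapT => hn.
have hall : forall U, nbhs x U -> U y.
  move=> U hU; apply: contrapT => nU; apply: hn; by exists U.
have [mm [_ [_ [iA _]]]] := hX x (fun _ _ => y) (fun n => conj (fun _ => hyx)
   (proj2 (eventP _ _) (fun U hU => ex_intro _ 0 (fun m _ => hall U hU)))).
apply: iA; apply: (sub_finite_set _ (finite_set1 y)).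
by move=> z [n [i [_ ->]]].
Qed.
Lemma key (X : topologicalType) (hX : alpha2m X) (x : X) (y : nat -> nat -> X)
  (hy : forall n, seq_lim (y n) x) (N : nat -> nat) :
  exists g : nat -> nat, (forall b, g b < g b.+1)%N /\ (forall b, N (g b) <= g b.+1)%N /\
    set_conv [set z | exists n m, [set n | exists b, n = g b] n /\
       [set n | exists b, n = g b] m /\ (n < m)%N /\ z = y n m] x.
Proof.
have [mm [hmm [cA [iA [nA fA]]]]] := hX x y hy.
have mmid := gid hmm.
pose K q := maxn (mm q).+1 (N (mm q)).
pose k b := iter b K 0.
have kS b : k b.+1 = K (k b) by [].
have kinc b : (k b < k b.+1)%N by rewrite kS /K; have := mmid (k b); lia.
pose g b := mm (k b).
have ginc b : (g b < g b.+1)%N.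
  rewrite /g; have := mmid (k b.+1); rewrite kS /K; lia.
have gN b : (N (g b) <= g b.+1)%N.
  rewrite /g; have := mmid (k b.+1); rewrite kS /K; lia.
exists g; split => //; split => //.
set B := [set z | _].
have BA : B `<=` [set y0 | exists n i, (i <= n)%N /\ y0 = y i (mm n)].
  move=> z [n [m [[a ->] [[b ->] [hab ->]]]]].
  have hab' : (a < b)%N by apply/(gmono ginc).
  exists (k b), (g a); split => //.
  have := ltnW_homo (homo_ltn ltn_trans kinc) hab'; rewrite /g kS /K; lia.
split; first exact: sub_countable (subset_card_le BA) cA.
split; last split.
- pose t (n m : nat) := y (g 0) (g m.+1).
  have ht : forall n, seq_lim (t n) x.
    move=> n; apply: (subseq_lim (h := fun m => g m.+1)) => // m.
    have := gid ginc m.+1; lia.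
  have [mm' [_ [_ [iA' _]]]] := hX x t ht.
  move=> fB; apply: iA'; apply: sub_finite_set fB.
  move=> z [n [i [_ ->]]]; exists (g 0), (g (mm' n).+1); split; first by exists 0.
  split; first by exists (mm' n).+1.
  by split => //; apply/(gmono ginc).
- by move=> [n [m [_ [_ [_ e]]]]]; exact: (proj1 (hy n) m (esym e)).
- move=> U hU; apply: sub_finite_set (fA U hU).
  by move=> z [/BA h1 h2].
Qed.
Lemma part1 (X : topologicalType) : alpha2m X -> locally_ramsey X.
Proof.
move=> hX x s hs.
have [g [hg [_ hB]]] := key hX hs (fun _ => 0).
exists [set n | exists b, n = g b]; split => //; exact: inf_range.
Qed.

Lemma Nspec (X : topologicalType) (hX : alpha2m X) (x : X) (y : nat -> nat -> X)
  (hy : forall n, seq_lim (y n) x) :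
  exists N : nat -> nat, forall p m0, (N p <= m0)%N -> forall n1, (n1 <= p)%N ->
    forall n2 m2, (n2 < m2)%N -> (m2 <= p)%N -> y n1 m0 <> y n2 m2.
Proof.
have H : forall p, exists Np, forall m0, (Np <= m0)%N -> forall n1, (n1 < p.+1)%N ->
    forall n2, (n2 < p.+1)%N -> forall m2, (m2 < p.+1)%N -> (n2 < m2)%N -> y n1 m0 <> y n2 m2.
  move=> p; apply: fin_ev => n1 _; apply: (fin_ev (P := fun n2 m0 => forall m2, (m2 < p.+1)%N -> (n2 < m2)%N -> y n1 m0 <> y n2 m2)) => n2 _.
  apply: (fin_ev (P := fun m2 m0 => (n2 < m2)%N -> y n1 m0 <> y n2 m2)) => m2 _.
  have [U [hU nU]] := sep hX (proj1 (hy n2) m2).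
  have [N0 HN0] := proj1 (eventP _ _) (proj2 (hy n1)) U hU.
  by exists N0 => m0 hm0 _ e; apply: nU; rewrite -e; apply: HN0.
have [N HN] := choice H.
exists N => p m0 hm0 n1 hn1 n2 m2 h12 hm2.
apply: (HN p m0 hm0 n1 _ n2 _ m2) => //; lia.
Qed.
Lemma part2 (X : topologicalType) (mul : X -> X -> X) (inv : X -> X) (e : X) :
  topological_group mul inv e -> alpha2m X -> ramsey X.
Proof.
move=> [mA [m1 [mV [hmul hinv]]]] hX x s xs hs hxs.
have mVr : forall a, mul a (inv a) = e.
  move=> a; rewrite -[LHS]m1 -(mV (inv a)) -mA (mA (inv a)) mV m1 //.
have m1r : forall a, mul a e = a by move=> a; rewrite -(mV a) mA mVr m1.
have hm : forall (f g : nat -> X) a b, f @ \oo --> a -> g @ \oo --> b ->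
    (fun m => mul (f m) (g m)) @ \oo --> mul a b.
  move=> f g a b hf hg; apply: (cvg_comp2 hf hg); exact: (hmul (a, b)).
pose y n m := mul (mul (s n m) (inv (xs n))) x.
have hy : forall n, seq_lim (y n) x.
  move=> n; split.
  - move=> m ey; apply: (proj1 (hs n) m).
    have : mul (y n m) (inv x) = mul x (inv x) by rewrite ey.
    rewrite /y -mA mVr m1r => h.
    by rewrite -[LHS]m1r -(mV (xs n)) mA h m1.
  - have := hm _ _ _ _ (hm _ _ _ _ (proj2 (hs n)) (cvg_cst (inv (xs n)))) (cvg_cst x).
    rewrite mVr m1 => h; apply: h.
have [N HN] := Nspec hX hy.
have [g [hg [gN [_ [_ [nB fB]]]]]] := key hX hy N.
pose I := [set n | exists b, n = g b].
exists I; split; first exact: inf_range.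
have uniq0 : forall n m n' m', I n -> I m -> I n' -> I m' -> (n < m)%N -> (n' < m')%N ->
    (m < m')%N -> y n m <> y n' m'.
  move=> n m n' m' [a ->] [b ->] [c ->] [d ->] h1 h2 h3.
  have {}h1 := proj1 (gmono hg _ _) h1; have {}h2 := proj1 (gmono hg _ _) h2.
  have {}h3 := proj1 (gmono hg _ _) h3.
  case: d h2 h3 => [|d] h2 h3; first by [].
  have hmon := ltnW_homo (homo_ltn ltn_trans hg).
  move=> eq; apply: (HN (g d) (g d.+1) (gN d) (g c) _ (g a) (g b) _ _ (esym eq)).
  - by apply: hmon; lia.
  - by apply/(gmono hg).
  - by apply: hmon; lia.
have uniq : forall n m n' m', I n -> I m -> I n' -> I m' -> (n < m)%N -> (n' < m')%N ->
    y n m = y n' m' -> m = m'.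
  move=> n m n' m' hn hmm hn' hm' h1 h2 eq.
  case: (ltngtP m m') => // h3.
  - by case: (uniq0 _ _ _ _ hn hmm hn' hm' h1 h2 h3 eq).
  - by case: (uniq0 _ _ _ _ hn' hm' hn hmm h2 h1 h3 (esym eq)).
move=> U hU.
have hU' : nbhs (mul e x) U by rewrite m1.
have [[P W] [hP hW] hPW] := hmul (e, x) U hU'.
have hP' : nbhs (mul x (inv x)) P by rewrite mVr.
have [[V V'] [hV hV'] hVV] := hmul (x, inv x) P hP'.
have V'i := nbhs_singleton hV'.
have [N1 HN1] := proj1 (eventP _ _) (proj2 hxs) W hW.
have Hf : forall z, exists M, (exists n m, I n /\ I m /\ (n < m)%N /\ z = y n m) ->
    exists n, I n /\ I M /\ (n < M)%N /\ z = y n M.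
  move=> z; case: (pselect (exists n m, I n /\ I m /\ (n < m)%N /\ z = y n m)).
  - by move=> [n [m h]]; exists m => _; exists n.
  - by move=> h; exists 0 => /h.
have [f hf] := choice Hf.
have [M2 HM2] := fin_bound (finite_image f (fB V hV)).
exists (maxn N1 M2) => n m hn hmm hkn hnm.
have hsnm : s n m = mul (mul (y n m) (inv x)) (xs n).
  by rewrite /y -(mA _ x) mVr m1r -mA mV m1r.
have Vy : V (y n m).
  apply: contrapT => nV.
  have hz : (exists n0 m0, I n0 /\ I m0 /\ (n0 < m0)%N /\ y n m = y n0 m0).
    by exists n, m.
  have [n' [hn' [hm' [h' e']]]] := hf _ hz.
  have := uniq _ _ _ _ hn hmm hn' hm' hnm h' e' => em.
  have := HM2 (f (y n m)) (ex_intro2 _ _ (y n m) (conj (ex_intro _ n (ex_intro _ m (conj hn (conj hmm (conj hnm erefl))))) nV) erefl).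
  lia.
rewrite hsnm; apply: (hPW (mul (y n m) (inv x), xs n)); split.
- by apply: (hVV (y n m, inv x)).
- apply: HN1; lia.
Qed.

Theorem proposition2p5 :
  (forall X : topologicalType, alpha2m X -> locally_ramsey X) /\
  (forall (X : topologicalType) (mul : X -> X -> X) (inv : X -> X) (e : X),
     topological_group mul inv e -> alpha2m X -> ramsey X).
Proof.
split; [exact: part1 | exact: part2].
Qed.
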